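(* For a weakly symmetric discrete memoryless channel $W$ with input alphabet $\mathbb{F}_q$, $$C_{KV}(W)\ge1-(q-1)Z(W),$$ where $Z(W)$ is the Bhattacharyya parameter of $W$.
   Context: A discrete memoryless channel with transition probabilities $W(y|x)$, $x\in\mathbb{F}_q$, $y\in\mathcal{Y}$, is weakly symmetric if $\mathcal{Y}$ admits a partition $Y_1\cup\dots\cup Y_r$ such that each submatrix $(W(y|x))_{x,y\in Y_i}$ has all rows permutations of each other and all columns permutations of each other. With input $X$ uniform on $\mathbb{F}_q$ and output $Y$, the APP vector of output $y$ is $\pi_y=(\mathrm{prob}(X=\alpha|Y=y))_\alpha$ and the Koetter–Vardy capacity is $C_{KV}(W)=\mathbb{E}(\sum_\alpha\pi_Y(\alpha)^2)$. The Bhattacharyya parameter is $Z(W)=\frac1{q(q-1)}\sum_{x\ne x'}\sum_{y\in\mathcal{Y}}\sqrt{W(y|x)W(y|x')}$. *)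

(* Defs.v *)
From HB Require Import structures.
From mathcomp Require Import all_boot all_order all_algebra all_field.
From mathcomp Require Import reals.
Set Implicit Arguments. Unset Strict Implicit. Unset Printing Implicit Defensive.
Import Order.TTheory GRing.Theory Num.Theory.
Local Open Scope ring_scope.

(* A DMC with input alphabet F (a finite field F_q) and finite output
   alphabet Y is a matrix W : F -> Y -> R, with  W x y = W(y|x). *)
Definition is_channel (R : realType) (F : finFieldType) (Y : finType)
  (W : F -> Y -> R) : Prop :=
  (forall x y, 0 <= W x y) /\ (forall x, \sum_(y : Y) W x y = 1).

Definition weakly_symmetric (R : realType) (F : finFieldType) (Y : finType)
  (W : F -> Y -> R) : Prop :=
  exists P : {set {set Y}},
    partition P [set: Y] /\
    forall B, B \in P ->
      (forall x x' : F,
         perm_eq [seq W x y | y <- enum B] [seq W x' y | y <- enum B]) /\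
      (forall y y', y \in B -> y' \in B ->
         perm_eq [seq W x y | x <- enum F] [seq W x y' | x <- enum F]).

Definition qF (R : realType) (F : finFieldType) : R := (#|F|)%:R.

Definition out_prob (R : realType) (F : finFieldType) (Y : finType)
  (W : F -> Y -> R) (y : Y) : R :=
  (qF R F)^-1 * \sum_(x : F) W x y.

(* APP vector: pi_y(a) = prob(X = a | Y = y) = W(y|a) / sum_x W(y|x)
   (only relevant when prob(Y = y) > 0; it is weighted by prob(Y=y)). *)
Definition app (R : realType) (F : finFieldType) (Y : finType)
  (W : F -> Y -> R) (y : Y) (a : F) : R :=
  W a y / \sum_(x : F) W x y.

Definition C_KV (R : realType) (F : finFieldType) (Y : finType)
  (W : F -> Y -> R) : R :=
  \sum_(y : Y) out_prob W y * \sum_(a : F) (app W y a) ^+ 2.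

Definition bhatt (R : realType) (F : finFieldType) (Y : finType)
  (W : F -> Y -> R) : R :=
  (qF R F * (qF R F - 1))^-1 *
  \sum_(x : F) \sum_(x' : F | x' != x) \sum_(y : Y) Num.sqrt (W x y * W x' y).

(* Main.v *)
Require Import Defs.
From HB Require Import structures.
From mathcomp Require Import all_boot all_order all_algebra all_field.
From mathcomp Require Import reals.
Import Order.TTheory GRing.Theory Num.Theory.
Local Open Scope ring_scope.
Set Warnings "-notation-overridden -ambiguous-paths".
From mathcomp Require Import ring lra.

Lemma pointwise (R : realType) (F : finType) (w : F -> R) :
  forall S, S = \sum_x w x -> (forall x, 0 <= w x) ->
  S - \sum_x \sum_(x' | x' != x) Num.sqrt (w x * w x')
    <= S * \sum_a (w a / S) ^+ 2.
Proof.
move=> S SE w0.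
have T0 : 0 <= \sum_x \sum_(x' | x' != x) Num.sqrt (w x * w x').
  by apply: sumr_ge0 => x _; apply: sumr_ge0 => x' _; exact: sqrtr_ge0.
have S0 : 0 <= S by rewrite SE; apply: sumr_ge0.
have wS : forall x, w x <= S.
  move=> x; rewrite SE (bigD1 x) //= -{1}[w x]addr0 lerD2l; exact: sumr_ge0.
have [Sz|Sp] := eqVneq S 0.
  rewrite Sz mul0r sub0r oppr_le0 //.
have Spos : 0 < S by rewrite lt_def Sp S0.
have -> : S * \sum_a (w a / S) ^+ 2 = (\sum_a w a ^+ 2) / S.
  rewrite mulr_sumr mulr_suml; apply: eq_bigr => a _.
  by field.
rewrite ler_pdivlMr // mulrBl.
have -> : S * S = \sum_x w x ^+ 2 + \sum_x \sum_(x' | x' != x) w x * w x'.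
  rewrite {1}SE mulr_suml -big_split /=; apply: eq_bigr => x _.
  by rewrite SE mulr_sumr (bigD1 x) //= expr2.
rewrite -addrA gerDl subr_le0 mulr_suml; apply: ler_sum => x _.
rewrite mulr_suml; apply: ler_sum => x' _.
have p0 : 0 <= w x * w x' by rewrite mulr_ge0.
rewrite -{1}(sqr_sqrtr p0) expr2 ler_wpM2l ?sqrtr_ge0 //.
rewrite -(@ger0_norm _ S) // -sqrtr_sqr expr2 ler_sqrt ?mulr_ge0 //.
by apply: ler_pM.
Qed.

Theorem proposition4 (R : realType) (F : finFieldType) (Y : finType)
  (W : F -> Y -> R) :
  is_channel W -> weakly_symmetric W ->
  1 - (qF R F - 1) * bhatt W <= C_KV W.
Proof.
move=> [W0 W1] _.
have q1 : (1 < #|F|)%N by exact: card_finNzRing_gt1.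
have qn0 : qF R F != 0 by rewrite /qF pnatr_eq0 -lt0n; apply: ltnW.
have q1n0 : qF R F - 1 != 0.
  by rewrite /qF subr_eq0 pnatr_eq1 neq_ltn q1 orbT.
have -> : (qF R F - 1) * bhatt W = (qF R F)^-1 *
    \sum_y \sum_x \sum_(x' | x' != x) Num.sqrt (W x y * W x' y).
  have -> : \sum_y \sum_x \sum_(x' | x' != x) Num.sqrt (W x y * W x' y) =
     \sum_x \sum_(x' | x' != x) \sum_y Num.sqrt (W x y * W x' y).
    rewrite exchange_big /=; apply: eq_bigr => x _.
    by rewrite exchange_big.
  rewrite /bhatt; field.
  by rewrite qn0 q1n0.
have E1 : 1 = (qF R F)^-1 * \sum_y \sum_x W x y.
  rewrite exchange_big /= (eq_bigr (fun _ => 1)) ?W1 // sumr_const.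
  by rewrite /qF mulVf // -[_ *+ _]mulr_natl mulr1.
rewrite {1}E1.
rewrite /C_KV /out_prob -mulrBr -sumrB mulr_sumr; apply: ler_sum => y _.
rewrite -mulrA ler_wpM2l ?invr_ge0 ?ler0n //.
exact: (@pointwise R F (fun a => W a y) _ erefl).
Qed.
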